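(* Let $Z_1,\ldots,Z_{n+1}$ be i.i.d. from an arbitrary distribution $\mathcal P$, $V$ a fixed score function, $\alpha\in(0,1)$. Fix a finite grid $\mathcal G\subset[0,1]$ containing $0$ and $1$. For $a\in\mathcal G$ let $S(a)=\frac{1}{n+1}\sum_{i=1}^{n+1}\mathbb 1\{V_i\le Q(a;\hat{\mathcal F}_i)\}$. Let $\tilde\alpha_1=\min\{a\in\mathcal G:S(a)\ge\alpha\}$, $\tilde\alpha_2=\max\{a\in\mathcal G:S(a)<\alpha\}$, $\alpha_1=S(\tilde\alpha_1)$, $\alpha_2=S(\tilde\alpha_2)$, and let $\tilde\alpha=\tilde\alpha_1$ with probability $\frac{\alpha-\alpha_2}{\alpha_1-\alpha_2}$ and $\tilde\alpha=\tilde\alpha_2$ with probability $\frac{\alpha_1-\alpha}{\alpha_1-\alpha_2}$, using a randomization independent of the data. Then $\mathbb P\{V_{n+1}\le Q(\tilde\alpha;\hat{\mathcal F})\}=\alpha$.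
   Context: Data: $Z_i=(X_i,Y_i)\in\mathbb R^p\times\mathbb R$, $i=1,\ldots,n+1$; $X=\{X_1,\ldots,X_{n+1}\}$ (unordered). A localizer is a function $H(x_1,x_2,X)\in[0,1]$ of $x_1,x_2\in\mathbb R^p$ and of the unordered set $X$, satisfying $H(x,x,X)=1$ for all $x$. Write $H_{i,j}=H(X_i,X_j,X)$ and $p^H_{i,j}=H_{i,j}/\sum_{k=1}^{n+1}H_{i,k}$. For a probability distribution $\mathcal F$ on $\mathbb R\cup\{\infty\}$ and $a\in[0,1]$, $Q(a;\mathcal F)=\inf\{t:\mathbb P_{T\sim\mathcal F}(T\le t)\ge a\}$ (with $Q(0;\mathcal F)=-\infty$); $\delta_v$ denotes the point mass at $v$. A fixed score function is a deterministic measurable $V:\mathbb R^p\times\mathbb R\to[0,\infty)$ not depending on the data; $V_i=V(Z_i)$. Define $\hat{\mathcal F}_i=\sum_{j=1}^{n+1}p^H_{i,j}\delta_{V_j}$ for $i=1,\ldots,n+1$, and $\hat{\mathcal F}=\sum_{j=1}^{n}p^H_{n+1,j}\delta_{V_j}+p^H_{n+1,n+1}\delta_{\infty}$.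
   Formalization: Each localizer entry $H_{i,j}=H(X_i,X_j,X)$ is also a measurable function of the data $(Z_1,\ldots,Z_{n+1})$, for all i and j. The statement above fails without it. *)

(* Defs.v *)
From HB Require Import structures.
From mathcomp Require Import all_boot all_order all_algebra.
From mathcomp Require Import all_classical all_reals all_analysis.
Set Implicit Arguments. Unset Strict Implicit. Unset Printing Implicit Defensive.
Import Order.TTheory GRing.Theory Num.Theory.
Local Open Scope classical_set_scope.
Local Open Scope ring_scope.

Section LocalizedConformal.
Variables (R : realType) (p n : nat).

Definition dataT := (p.-tuple R * R)%type.

(* Q(a; F) for the discrete distribution F = \sum_j w j \delta_{v j}
   on R \cup {oo}, with Q(0; F) = -oo. *)
Definition quantile m (w : 'I_m -> R) (v : 'I_m -> \bar R) (a : R) : \bar R :=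
  if a == 0 then -oo%E
  else ereal_inf [set t : \bar R |
         (a%:E <= (\sum_(j < m | (v j <= t)%E) w j)%:E)%E].

Variables (V : dataT -> R)
          (H : p.-tuple R -> p.-tuple R -> set (p.-tuple R) -> R).

Definition Hmat (z : 'I_n.+1 -> dataT) (i j : 'I_n.+1) : R :=
  H (z i).1 (z j).1 [set (z k).1 | k in [set: 'I_n.+1]].

Definition pH (z : 'I_n.+1 -> dataT) (i j : 'I_n.+1) : R :=
  Hmat z i j / \sum_(k < n.+1) Hmat z i k.

Definition Q_Fi (z : 'I_n.+1 -> dataT) (i : 'I_n.+1) (a : R) : \bar R :=
  quantile (pH z i) (fun j => (V (z j))%:E) a.

Definition Q_Fhat (z : 'I_n.+1 -> dataT) (a : R) : \bar R :=
  quantile (pH z ord_max)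
    (fun j => if j == ord_max then +oo%E else (V (z j))%:E) a.

Definition Sfun (z : 'I_n.+1 -> dataT) (a : R) : R :=
  (n.+1%:R)^-1 * \sum_(i < n.+1) ((V (z i))%:E <= Q_Fi z i a)%E%:R.

Variables (grid : seq R) (alpha : R).

Definition talpha1 (z : 'I_n.+1 -> dataT) : R :=
  inf [set a | a \in grid /\ alpha <= Sfun z a].
Definition talpha2 (z : 'I_n.+1 -> dataT) : R :=
  sup [set a | a \in grid /\ Sfun z a < alpha].

Definition alpha1 z := Sfun z (talpha1 z).
Definition alpha2 z := Sfun z (talpha2 z).

(* randomized choice driven by an auxiliary u in [0,1]:
   tilde alpha = tilde alpha_1 iff u <= (alpha - alpha_2)/(alpha_1 - alpha_2),
   so that for u ~ Unif[0,1] independent of the data this happens with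
   probability (alpha - alpha_2)/(alpha_1 - alpha_2). *)
Definition talpha (z : 'I_n.+1 -> dataT) (u : R) : R :=
  if u <= (alpha - alpha2 z) / (alpha1 z - alpha2 z) then talpha1 z
  else talpha2 z.

End LocalizedConformal.

Definition mutually_independent (R : realType) (d : measure_display)
  (Omega : measurableType d) (P : probability Omega R) (p n : nat)
  (Z : 'I_n.+1 -> Omega -> dataT R p) (U : Omega -> R) : Prop :=
  forall (A : 'I_n.+1 -> set (dataT R p)) (B : set R),
    (forall i, measurable (A i)) -> measurable B ->
    P ((\bigcap_i (Z i @^-1` A i)) `&` (U @^-1` B)) =
    ((\prod_(i < n.+1) P (Z i @^-1` A i)) * P (U @^-1` B))%E.

(* Main.v *)
Require Import Defs.
From HB Require Import structures.
From mathcomp Require Import all_boot all_order all_algebra.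
From mathcomp Require Import all_classical all_reals all_analysis.
Import Order.TTheory GRing.Theory Num.Theory.
Local Open Scope classical_set_scope.
Local Open Scope ring_scope.
From mathcomp Require Import fingroup perm.
From mathcomp.algebra_tactics Require Import ring.
Set Implicit Arguments. Unset Strict Implicit. Unset Printing Implicit Defensive.

Section Quant.
Variable R : realType.

Lemma quantile_geP m (w : 'I_m -> R) (v : 'I_m -> \bar R) (a x : R) :
  (forall j, 0 <= w j) -> a != 0 ->
  (x%:E <= quantile w v a)%E = (\sum_(j < m | (v j < x%:E)%E) w j < a).
Proof.
move=> w0 a0; rewrite /quantile (negbTE a0).
apply/idP/idP => [xle|lta].
- rewrite ltNge; apply/negP => ale.
  pose t0 := \big[Order.max/-oo%E]_(j | (v j < x%:E)%E) v j.
  have t0x : (t0 < x%:E)%E by apply: bigmax_lt => //; exact: ltNyr.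
  have St0 : (a%:E <= (\sum_(j < m | (v j <= t0)%E) w j)%:E)%E.
    rewrite lee_fin (eq_bigl (fun j => (v j < x%:E)%E)) // => j.
    apply/idP/idP => [vjt|vjx]; first exact: le_lt_trans vjt t0x.
    exact: le_bigmax_cond.
  have it0 := @ereal_inf_lbound R [set t | (a%:E <= (\sum_(j < m | (v j <= t)%E) w j)%:E)%E] t0 St0.
  by have := le_lt_trans (le_trans xle it0) t0x; rewrite ltxx.
- apply/ereal_infP => t /=; rewrite lee_fin => St.
  rewrite leNgt; apply/negP => tx.
  suff : \sum_(j < m | (v j <= t)%E) w j <= \sum_(j < m | (v j < x%:E)%E) w j.
    by move=> h; have := le_lt_trans (le_trans St h) lta; rewrite ltxx.
  rewrite [leRHS]big_mkcond [leLHS]big_mkcond /=; apply: ler_sum => j _.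
  case: ifPn => vjt; last by case: ifPn.
  by rewrite (le_lt_trans vjt tx).
Qed.

Lemma seq_min (s : seq R) (P : pred R) a : a \in s -> P a ->
  exists m, [/\ m \in s, P m & forall b, b \in s -> P b -> m <= b].
Proof.
elim: s a => // b s IH a ain Pa.
case: (boolP (has P s)) => [/hasP[c cs Pc]|/hasPn nc].
- have [m [ms Pm mmin]] := IH c cs Pc.
  case: (boolP (P b && (b <= m))) => [/andP[Pb bm]|nb].
  + exists b; split => //; first by rewrite mem_head.
    move=> c'; rewrite in_cons => /orP[/eqP->//|c's] Pc'.
    exact: le_trans bm (mmin _ c's Pc').
  + exists m; split => //; first by rewrite in_cons ms orbT.
    move=> c'; rewrite in_cons => /orP[/eqP->|c's] Pc'; last exact: mmin.
    by move: nb; rewrite Pc' /= -ltNge => /ltW.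
- move: ain; rewrite in_cons => /orP[/eqP ab|ais]; last first.
    by have := nc _ ais; rewrite Pa.
  subst a; exists b; split => //; first by rewrite mem_head.
  move=> c'; rewrite in_cons => /orP[/eqP->//|c's] Pc'.
  by have := nc _ c's; rewrite Pc'.
Qed.

Lemma seq_max (s : seq R) (P : pred R) a : a \in s -> P a ->
  exists m, [/\ m \in s, P m & forall b, b \in s -> P b -> b <= m].
Proof.
elim: s a => // b s IH a ain Pa.
case: (boolP (has P s)) => [/hasP[c cs Pc]|/hasPn nc].
- have [m [ms Pm mmin]] := IH c cs Pc.
  case: (boolP (P b && (m <= b))) => [/andP[Pb bm]|nb].
  + exists b; split => //; first by rewrite mem_head.
    move=> c'; rewrite in_cons => /orP[/eqP->//|c's] Pc'.
    exact: le_trans (mmin _ c's Pc') bm.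
  + exists m; split => //; first by rewrite in_cons ms orbT.
    move=> c'; rewrite in_cons => /orP[/eqP->|c's] Pc'; last exact: mmin.
    by move: nb; rewrite Pc' /= -ltNge => /ltW.
- move: ain; rewrite in_cons => /orP[/eqP ab|ais]; last first.
    by have := nc _ ais; rewrite Pa.
  subst a; exists b; split => //; first by rewrite mem_head.
  move=> c'; rewrite in_cons => /orP[/eqP->//|c's] Pc'.
  by have := nc _ c's; rewrite Pc'.
Qed.

Lemma inf_seq (s : seq R) (P : pred R) a : a \in s -> P a ->
  [/\ inf [set x | x \in s /\ P x] \in s, P (inf [set x | x \in s /\ P x]) &
   forall b, b \in s -> P b -> inf [set x | x \in s /\ P x] <= b].
Proof.
move=> as_ Pa; have [m [ms Pm mmin]] := seq_min as_ Pa.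
suff -> : inf [set x | x \in s /\ P x] = m by [].
apply/le_anti/andP; split.
- apply: ge_inf; last by split.
  by exists m => y [ys Py]; exact: mmin.
- apply: lb_le_inf; first by exists m.
  by move=> y [ys Py]; exact: mmin.
Qed.

Lemma sup_seq (s : seq R) (P : pred R) a : a \in s -> P a ->
  [/\ sup [set x | x \in s /\ P x] \in s, P (sup [set x | x \in s /\ P x]) &
   forall b, b \in s -> P b -> b <= sup [set x | x \in s /\ P x]].
Proof.
move=> as_ Pa; have [m [ms Pm mmin]] := seq_max as_ Pa.
suff -> : sup [set x | x \in s /\ P x] = m by [].
apply/le_anti/andP; split.
- apply: ge_sup; first by exists m.
  by move=> y [ys Py]; exact: mmin.
- apply: ub_le_sup; last by split.
  by exists m => y [ys Py]; exact: mmin.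
Qed.
End Quant.

Section Crit.
Variables (R : realType) (p n : nat) (V : dataT R p -> R)
  (H : p.-tuple R -> p.-tuple R -> set (p.-tuple R) -> R).
Hypothesis H01 : forall x1 x2 X, 0 <= H x1 x2 X <= 1.
Hypothesis H1 : forall x X, H x x X = 1.
Implicit Types z : 'I_n.+1 -> dataT R p.

Definition cN z i := \sum_(j | V (z j) < V (z i)) Hmat H z i j.
Definition DD z i := \sum_(k < n.+1) Hmat H z i k.

Lemma Hmat_ge0 z i j : 0 <= Hmat H z i j.
Proof. by case/andP: (H01 (z i).1 (z j).1 [set (z k).1 | k in [set: 'I_n.+1]]). Qed.

Lemma Hmat_ii z i : Hmat H z i i = 1.
Proof. exact: H1. Qed.

Lemma DD_split z i : DD z i = 1 + \sum_(k | k != i) Hmat H z i k.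
Proof. by rewrite /DD (bigD1 i) //= Hmat_ii. Qed.

Lemma DD_gt0 z i : 0 < DD z i.
Proof.
rewrite DD_split; apply: (lt_le_trans ltr01); rewrite lerDl.
by apply: sumr_ge0 => k _; exact: Hmat_ge0.
Qed.

Lemma pH_ge0 z i j : 0 <= pH H z i j.
Proof. by rewrite /pH divr_ge0 ?Hmat_ge0 // ltW // DD_gt0. Qed.

Lemma crit_gen z i (v : 'I_n.+1 -> \bar R) a :
  (forall j, (v j < (V (z i))%:E)%E = (V (z j) < V (z i))) ->
  ((V (z i))%:E <= quantile (pH H z i) v a)%E = (a != 0) && (cN z i < a * DD z i).
Proof.
move=> hv; have [->|a0] := eqVneq a 0.
  by rewrite /quantile eqxx /= leeNy_eq.
rewrite quantile_geP //; last exact: pH_ge0.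
rewrite /= (eq_bigl _ _ hv) /pH -big_distrl /= ltr_pdivrMr //.
exact: DD_gt0.
Qed.

Lemma Fi_crit z i a :
  ((V (z i))%:E <= Q_Fi V H z i a)%E = (a != 0) && (cN z i < a * DD z i).
Proof. by apply: crit_gen => j; rewrite lte_fin. Qed.

Lemma Fhat_crit z a :
  ((V (z ord_max))%:E <= Q_Fhat V H z a)%E =
  (a != 0) && (cN z ord_max < a * DD z ord_max).
Proof.
apply: crit_gen => j; case: eqP => [->|_]; last by rewrite lte_fin.
by rewrite ltxx.
Qed.

Section Perm.
Variable s : {perm 'I_n.+1}.

Lemma Hmat_perm z i j : Hmat H (z \o s) i j = Hmat H z (s i) (s j).
Proof.
rewrite /Hmat /=; congr H; apply/seteqP; split => _ [k _ <-].
  by exists (s k).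
by exists ((s^-1)%g k) => //=; rewrite permKV.
Qed.

Lemma DD_perm z i : DD (z \o s) i = DD z (s i).
Proof.
rewrite /DD [RHS](reindex_inj (@perm_inj _ s)) /=.
by apply: eq_bigr => k _; rewrite Hmat_perm.
Qed.

Lemma cN_perm z i : cN (z \o s) i = cN z (s i).
Proof.
rewrite /cN [RHS](reindex_inj (@perm_inj _ s)) /=.
by apply: eq_bigr => k _; rewrite Hmat_perm.
Qed.

Lemma b_perm z i a :
  ((V (z (s i)))%:E <= Q_Fi V H (z \o s) i a)%E =
  ((V (z (s i)))%:E <= Q_Fi V H z (s i) a)%E.
Proof.
by have := Fi_crit (z \o s) i a; rewrite /= => ->; rewrite Fi_crit cN_perm DD_perm.
Qed.

Lemma Sfun_perm z : Sfun V H (z \o s) = Sfun V H z.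
Proof.
apply/funext => a; rewrite /Sfun; congr (_ * _).
rewrite [RHS](reindex_inj (@perm_inj _ s)) /=.
by apply: eq_bigr => i _; rewrite b_perm.
Qed.

Lemma talpha_perm grid alpha z u :
  talpha V H grid alpha (z \o s) u = talpha V H grid alpha z u.
Proof.
by rewrite /talpha /alpha1 /alpha2 /talpha1 /talpha2 Sfun_perm.
Qed.
End Perm.

Lemma Sfun0 z : Sfun V H z 0 = 0.
Proof.
rewrite /Sfun big1 ?mulr0 // => i _.
by rewrite Fi_crit eqxx.
Qed.

Lemma Sfun1 z : Sfun V H z 1 = 1.
Proof.
rewrite /Sfun (eq_bigr (fun _ => 1)).
  by rewrite sumr_const card_ord mulVf.
move=> i _; rewrite Fi_crit oner_eq0 mul1r /=.
suff -> : cN z i < DD z i by [].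
apply: (le_lt_trans (y := \sum_(k | k != i) Hmat H z i k)).
  rewrite /cN [leRHS]big_mkcond [leLHS]big_mkcond /=; apply: ler_sum => j _.
  case: ifPn => hj; last by case: ifPn => // _; exact: Hmat_ge0.
  case: eqP => [ji|//]; by move: hj; rewrite ji ltxx.
by rewrite DD_split ltrDr ltr01.
Qed.

End Crit.

Section Grid.
Variables (R : realType) (p n : nat) (V : dataT R p -> R)
  (H : p.-tuple R -> p.-tuple R -> set (p.-tuple R) -> R)
  (grid : seq R) (alpha : R).
Hypothesis H01 : forall x1 x2 X, 0 <= H x1 x2 X <= 1.
Hypothesis H1 : forall x X, H x x X = 1.
Hypothesis alpha01 : 0 < alpha < 1.
Hypothesis g0 : 0 \in grid.
Hypothesis g1 : 1 \in grid.
Implicit Types z : 'I_n.+1 -> dataT R p.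

Definition bF z i g := ((V (z i))%:E <= Q_Fi V H z i g)%E.

Lemma t1_props z :
  [/\ talpha1 V H grid alpha z \in grid, alpha <= alpha1 V H grid alpha z &
   forall b, b \in grid -> alpha <= Sfun V H z b -> talpha1 V H grid alpha z <= b].
Proof.
have [] := @inf_seq R grid (fun a => alpha <= Sfun V H z a) 1 g1.
  by rewrite Sfun1 // ltW //; case/andP: alpha01.
by [].
Qed.

Lemma t2_props z :
  [/\ talpha2 V H grid alpha z \in grid, alpha2 V H grid alpha z < alpha &
   forall b, b \in grid -> Sfun V H z b < alpha -> b <= talpha2 V H grid alpha z].
Proof.
have [] := @sup_seq R grid (fun a => Sfun V H z a < alpha) 0 g0.
  by rewrite Sfun0 //; case/andP: alpha01.
by [].
Qed.

Lemma talpha_in z u : talpha V H grid alpha z u \in grid.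
Proof.
rewrite /talpha; case: ifP => _; first by case: (t1_props z).
by case: (t2_props z).
Qed.

Lemma alpha12 z : alpha2 V H grid alpha z < alpha1 V H grid alpha z.
Proof.
case: (t1_props z) => _ h1 _; case: (t2_props z) => _ h2 _.
exact: lt_le_trans h2 h1.
Qed.

Lemma Sfun_bF z a : Sfun V H z a = (n.+1%:R)^-1 * \sum_(i < n.+1) (bF z i a)%:R.
Proof. by []. Qed.

Lemma talpha_ext z z' u :
  (forall i g, g \in grid -> bF z i g = bF z' i g) ->
  talpha V H grid alpha z u = talpha V H grid alpha z' u.
Proof.
move=> hb.
have hS : forall g, g \in grid -> Sfun V H z g = Sfun V H z' g.
  by move=> g gg; rewrite !Sfun_bF; congr (_ * _); apply: eq_bigr => i _; rewrite hb.
have e1 : talpha1 V H grid alpha z = talpha1 V H grid alpha z'.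
  rewrite /talpha1; congr inf; apply/seteqP; split => a [ag ha]; split => //.
    by rewrite -hS.
  by rewrite hS.
have e2 : talpha2 V H grid alpha z = talpha2 V H grid alpha z'.
  rewrite /talpha2; congr sup; apply/seteqP; split => a [ag ha]; split => //.
    by rewrite -hS.
  by rewrite hS.
have ea1 : alpha1 V H grid alpha z = alpha1 V H grid alpha z'.
  by rewrite /alpha1 e1 hS //; case: (t1_props z') => ? _ _.
have ea2 : alpha2 V H grid alpha z = alpha2 V H grid alpha z'.
  by rewrite /alpha2 e2 hS //; case: (t2_props z') => ? _ _.
by rewrite /talpha ea1 ea2 e1 e2.
Qed.

Definition cc z := (alpha - alpha2 V H grid alpha z) /
  (alpha1 V H grid alpha z - alpha2 V H grid alpha z).

Lemma talphaE z u : talpha V H grid alpha z u =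
  if u <= cc z then talpha1 V H grid alpha z else talpha2 V H grid alpha z.
Proof. by []. Qed.

Lemma cc01 z : 0 <= cc z <= 1.
Proof.
have h := alpha12 z; case: (t1_props z) => _ h1 _; case: (t2_props z) => _ h2 _.
have d0 : 0 < alpha1 V H grid alpha z - alpha2 V H grid alpha z by rewrite subr_gt0.
apply/andP; split.
  by rewrite /cc; apply: divr_ge0; rewrite subr_ge0 ltW.
by rewrite /cc ler_pdivrMr // mul1r lerD2r.
Qed.

Lemma cc_eq z : cc z * (alpha1 V H grid alpha z - alpha2 V H grid alpha z) =
  alpha - alpha2 V H grid alpha z.
Proof.
have h := alpha12 z; rewrite /cc divfK //.
by rewrite subr_eq0 gt_eqF.
Qed.

End Grid.

Section Atoms.
Context {d} (X : measurableType d) (R : realType).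

Lemma mset_bool (f : X -> bool) : measurable_fun setT f -> measurable [set x | f x].
Proof.
move=> mf; rewrite (_ : [set x | f x] = setT `&` f @^-1` [set true]).
  exact: mf.
by apply/seteqP; split => x //=; case.
Qed.

Lemma atoms_measurable (K : finType) (b : K -> X -> bool) (E : set (X * R)) :
  (forall k, measurable [set x | b k x]) ->
  (forall x x' u, (forall k, b k x = b k x') -> E (x, u) -> E (x', u)) ->
  (forall x, measurable [set u | E (x, u)]) -> measurable E.
Proof.
move=> mb Edep mE.
pose atom (be : {ffun K -> bool}) := [set x | forall k, b k x = be k].
have matom be : measurable (atom be).
  rewrite (_ : atom be = \bigcap_(k in setT) [set x | b k x = be k]).
    apply: fin_bigcap_measurable; first exact: finite_finset.
    move=> k _; case: (be k); first exact: mb.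
    rewrite (_ : [set x | b k x = false] = ~` [set x | b k x]).
      exact/measurableC/mb.
    by apply/seteqP; split => x /=; [move=> ->|move/negP/negbTE].
  apply/seteqP; split => x /= h k; first by move=> _; exact: h.
  exact: h.
pose piece be : set (X * R) :=
  if pselect (exists x, atom be x) is left h
  then atom be `*` [set u | E (projT1 (cid h), u)] else set0.
rewrite (_ : E = \bigcup_(be in setT) piece be).
  apply: fin_bigcup_measurable; first exact: finite_finset.
  move=> be _; rewrite /piece; case: pselect => h //.
  exact: measurableX.
apply/seteqP; split => [[x u] Exu|[x u] [be _]].
  exists [ffun k => b k x] => //; rewrite /piece; case: pselect => [h|nh]; last first.
    by exfalso; apply: nh; exists x => k; rewrite ffunE.
  have hx' := projT2 (cid h); split => /=.
    by move=> k; rewrite ffunE.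
  apply: (Edep x) Exu => k; by rewrite hx' ffunE.
rewrite /piece; case: pselect => // h [/= ax Ex'u].
apply: (Edep _ x) Ex'u => k; by rewrite ax (projT2 (cid h)).
Qed.
End Atoms.

Section SigmaClosed.
Context {T : Type} (G : set (set T)).
Lemma sgU X1 X2 : <<s G >> X1 -> <<s G >> X2 -> <<s G >> (X1 `|` X2).
Proof.
move=> h1 h2; rewrite (_ : X1 `|` X2 = \bigcup_k (if k == 0%N then X1 else X2)).
  by apply: sigma_algebra_bigcup => k; case: eqP.
apply/seteqP; split => x.
  by case=> h; [exists 0%N|exists 1%N].
by case=> k _; case: eqP => _ h; [left|right].
Qed.
Lemma sgD X1 X2 : <<s G >> X1 -> <<s G >> X2 -> <<s G >> (X1 `\` X2).
Proof.
move=> h1 h2; rewrite (_ : X1 `\` X2 = setT `\` ((setT `\` X1) `|` X2)).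
  by apply: sigma_algebraCD; apply: sgU => //; exact: sigma_algebraCD.
apply/seteqP; split => x /=.
  by move=> [x1 nx2]; split => // -[[_ /(_ x1)]|].
move=> [_ h]; split; last by move=> x2; apply: h; right.
by apply: contrapT => nx1; apply: h; left.
Qed.
End SigmaClosed.

Section Cyl.
Context {dT} (T : measurableType dT) (R : realType) (n : nat).

Definition cyl (A : 'I_n -> set T) : set (n.-tuple T) :=
  [set x | forall i, A i (tnth x i)].
Definition cylR (A : 'I_n -> set T) (B : set R) : set (n.-tuple T * R) :=
  cyl A `*` B.

Lemma cyl_measurable A : (forall i, measurable (A i)) -> measurable (cyl A).
Proof.
move=> mA; rewrite (_ : cyl A = \bigcap_(i in setT) ((@tnth n T)^~ i @^-1` A i)).
  apply: fin_bigcap_measurable; first exact: finite_finset.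
  move=> i _; rewrite -[X in measurable X]setTI; exact: measurable_tnth.
apply/seteqP; split => x /= h i; first by move=> _; exact: h.
exact: h.
Qed.

Definition Gcyl : set (set (n.-tuple T * R)) :=
  [set E | exists A B, [/\ forall i, measurable (A i), measurable B & E = cylR A B]].

Lemma Y_gen : measurable = <<s Gcyl >>.
Proof.
rewrite eqEsubset; split; last first.
  apply: smallest_sub; first exact: sigma_algebra_measurable.
  move=> _ [A [B [mA mB ->]]]; apply: measurableX => //; exact: cyl_measurable.
rewrite measurable_prod_measurableType.
apply: smallest_sub; first exact: smallest_sigma_algebra.
move=> _ [A mA] [B mB] <-.
pose F := [set A : set (n.-tuple T) | <<s Gcyl >> (A `*` B)].
have setTB : F setT.
  apply: sub_sigma_algebra; exists (fun _ => setT), B; split => //.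
  by apply/seteqP; split => -[x u] //= [_ Bu]; split.
suff : (@measurable _ (n.-tuple T)) `<=` F by move/(_ A mA).
apply: smallest_sub.
  split.
  - by rewrite /F /= set0X; exact: sigma_algebra0.
  - move=> A' FA'; rewrite /F /=.
    rewrite (_ : (setT `\` A') `*` B = (setT `*` B) `\` (A' `*` B)).
      exact: sgD.
    apply/seteqP; split => -[x u] /=; first by move=> [[_ nA] Bu]; split => // -[].
    by move=> [[_ Bu] h]; split => //; split => // Ax; apply: h.
  - move=> G FG; rewrite /F /=.
    rewrite (_ : (\bigcup_k G k) `*` B = \bigcup_k (G k `*` B)).
      exact: sigma_algebra_bigcup.
    apply/seteqP; split => -[x u] /=; first by move=> [[k _ Gk] Bu]; exists k.
    by move=> [k _ [Gk Bu]]; split => //; exists k.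
move=> S; rewrite -bigcup_seq => -[i _ [A' mA' <-]].
apply: sub_sigma_algebra.
exists (fun j => if j == i then A' else setT), B; split => //.
  by move=> j; case: eqP.
apply/seteqP; split => -[x u] /=.
  by move=> [[_ hx] Bu]; split => // j; case: eqP => [->|].
by move=> [hx Bu]; split => //; split => //; have := hx i; rewrite eqxx.
Qed.

Lemma Y_unique (m1 m2 : {measure set (n.-tuple T * R) -> \bar R}) :
  (m1 setT < +oo)%E ->
  (forall A B, (forall i, measurable (A i)) -> measurable B ->
     m1 (cylR A B) = m2 (cylR A B)) ->
  forall E, measurable E -> m1 E = m2 E.
Proof.
move=> m1oo h12 E mE.
apply: (measure_unique Gcyl (fun _ => setT)) => //.
- exact: Y_gen.
- move=> _ _ [A [B [mA mB ->]]] [A' [B' [mA' mB' ->]]].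
  exists (fun i => A i `&` A' i), (B `&` B'); split.
  + by move=> i; apply: measurableI.
  + exact: measurableI.
  + apply/seteqP; split => -[x u] /=.
      by move=> [[h Bu] [h' B'u]]; split => //; move=> i; split.
    by move=> [h [Bu B'u]]; split; split => // i; case: (h i).
- move=> _; exists (fun _ => setT), setT; split => //.
  by apply/seteqP; split => -[x u].
- by rewrite bigcup_const.
- by move=> _ [A [B [mA mB ->]]]; exact: h12.
Qed.

End Cyl.

Section Unif.
Variable R : realType.
Local Notation lam := (uniform_prob (@ltr01 R)).

Lemma unif_le (c : R) : 0 <= c <= 1 -> lam [set u | u <= c] = c%:E.
Proof.
move=> /andP[c0 c1].
rewrite /uniform_prob integral_uniform_pdf.
have -> : [set u : R | u <= c] `&` `[0, 1] = `[0, c]%classic.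
  apply/seteqP; split => x /=; rewrite !in_itv /=.
    by move=> [xc /andP[x0 _]]; rewrite x0 xc.
  by move=> /andP[x0 xc]; split => //; rewrite x0 (le_trans xc c1).
transitivity (\int[@lebesgue_measure R]_(x in `[0%R, c]%classic) (cst 1%:E x))%E.
  apply: eq_integral => x /set_mem /=; rewrite in_itv /= => /andP[x0 xc].
  by rewrite /uniform_pdf x0 (le_trans xc c1) subr0 invr1.
rewrite integral_cst //= mul1e lebesgue_measure_itv /= lte_fin.
case: ltP => [_|]; first by rewrite sube0.
by move=> c0'; have -> : c = 0 by apply/le_anti/andP.
Qed.

Lemma unif_sec (c : R) (b1 b2 : bool) : 0 <= c <= 1 ->
  lam [set u | if u <= c then b1 else b2] = (b1%:R * c + b2%:R * (1 - c))%:E.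
Proof.
move=> c01.
have mle : measurable [set u : R | u <= c].
  rewrite (_ : [set u : R | u <= c] = `]-oo, c]%classic); first exact: measurable_itv.
  by apply/seteqP; split => x /=; rewrite in_itv /=.
case: b1; case: b2 => /=.
- rewrite (_ : [set u | if u <= c then true else true] = setT); last first.
    by apply/seteqP; split => x //=; case: ifP.
  by rewrite probability_setT !mul1r addrC subrK.
- rewrite (_ : [set u | if u <= c then true else false] = [set u | u <= c]); last first.
    by apply/seteqP; split => x /=; case: ifP.
  transitivity c%:E; first exact: unif_le.
  by rewrite mul1r mul0r addr0.
- rewrite (_ : [set u | if u <= c then false else true] = ~` [set u | u <= c]); last first.
    by apply/seteqP; split => x /=; case: ifP.
  rewrite probability_setC //; transitivity (1 - c%:E)%E.
    by congr (_ - _)%E; exact: unif_le.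
  by rewrite mul1r mul0r add0r EFinB.
- rewrite (_ : [set u | if u <= c then false else false] = set0); last first.
    by apply/seteqP; split => x //=; case: ifP.
  by rewrite measure0 !mul0r addr0.
Qed.
End Unif.
Section LamR.
Variable R : realType.
Definition lamR : set R -> \bar R := uniform_prob (@ltr01 R).
Let lamR0 : lamR set0 = 0%E. Proof. exact: measure0. Qed.
Let lamR_ge0 A : (0 <= lamR A)%E. Proof. exact: measure_ge0. Qed.
Let lamR_sa : semi_sigma_additive lamR.
Proof. move=> F mF tF mUF; exact: (@measure_semi_sigma_additive _ _ _ (uniform_prob (@ltr01 R)) F mF tF mUF). Qed.
HB.instance Definition _ := isMeasure.Build _ R R lamR lamR0 lamR_ge0 lamR_sa.
Let lamR_setT : lamR setT = 1%E. Proof. exact: probability_setT. Qed.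
HB.instance Definition _ := Measure_isProbability.Build _ _ _ lamR lamR_setT.
End LamR.

Unset Implicit Arguments.

Theorem corollary3 (R : realType) (p n : nat)
  (d : measure_display) (Omega : measurableType d) (P : probability Omega R)
  (mu : probability (dataT R p) R)
  (Z : 'I_n.+1 -> Omega -> dataT R p) (U : Omega -> R)
  (V : dataT R p -> R)
  (H : p.-tuple R -> p.-tuple R -> set (p.-tuple R) -> R)
  (grid : seq R) (alpha : R) :
  (* fixed score function *)
  (forall z, 0 <= V z) -> measurable_fun setT V ->
  (* localizer *)
  (forall x1 x2 X, 0 <= H x1 x2 X <= 1) ->
  (forall x X, H x x X = 1) ->
  (forall i j : 'I_n.+1,
     measurable_fun setT
       (fun z : n.+1.-tuple (dataT R p) => Hmat H (tnth z) i j)) ->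
  (* level and grid *)
  0 < alpha < 1 ->
  0 \in grid -> 1 \in grid -> (forall a, a \in grid -> 0 <= a <= 1) ->
  (* Z_1, ..., Z_{n+1} i.i.d. ~ mu, U ~ Unif[0,1], all independent *)
  (forall i, measurable_fun setT (Z i)) -> measurable_fun setT U ->
  (forall i A, measurable A -> P (Z i @^-1` A) = mu A) ->
  (forall B, measurable B -> P (U @^-1` B) = uniform_prob (@ltr01 R) B) ->
  mutually_independent P Z U ->
  P [set w | ((V (Z ord_max w))%:E <=
              Q_Fhat V H (fun i => Z i w)
                (talpha V H grid alpha (fun i => Z i w) (U w)))%E]
  = alpha%:E.
Proof.
move=> V0 mV H01 H1 mHmat alpha01 g0 g1 grid01 mZ mU Zdist Udist indep.
pose zt : Omega -> n.+1.-tuple (dataT R p) := fun w => [tuple Z i w | i < n.+1].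
have ztE w : tnth (zt w) = (fun i => Z i w) by apply/funext => i; rewrite tnth_mktuple.
have mzt : measurable_fun setT zt.
  apply/measurable_fun_tnthP => i.
  by rewrite (_ : _ \o _ = Z i) //; apply/funext => w /=; rewrite tnth_mktuple.
pose W := fun w => (zt w, U w).
have mW : measurable_fun setT W by exact: measurable_fun_pair.
pose ptup (s : {perm 'I_n.+1}) (x : n.+1.-tuple (dataT R p)) :=
  [tuple tnth x (s i) | i < n.+1].
have ptupE s x : tnth (ptup s x) = tnth x \o s by apply/funext => i; rewrite tnth_mktuple.
pose Ws s := fun w => (ptup s (zt w), U w).
have mWs s : measurable_fun setT (Ws s).
  apply: measurable_fun_pair => //.
  apply/measurable_fun_tnthP => i.
  by rewrite (_ : _ \o _ = Z (s i)) //; apply/funext => w /=; rewrite !tnth_mktuple.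
pose lam := @lamR R.
have mfun_in (f : Omega -> n.+1.-tuple (dataT R p) * R) : measurable_fun setT f -> f \in mfun.
  by move=> mf; exact/mem_set.
have mfun_in' (f : Omega -> n.+1.-tuple (dataT R p)) : measurable_fun setT f -> f \in mfun.
  by move=> mf; exact/mem_set.
pose PZ := distribution P (mfun_Sub (mfun_in' _ mzt)).
pose nu := (PZ \x lam)%E.
have PZE A : PZ A = P (zt @^-1` A) by [].
have nuE A : nu A = (\int[PZ]_x lam (xsection A x))%E by [].
pose val (A : 'I_n.+1 -> set (dataT R p)) (B : set R) :=
  ((\prod_(i < n.+1) mu (A i)) * lam B)%E.
have valW A B : (forall i, measurable (A i)) -> measurable B ->
    P (W @^-1` cylR A B) = val A B.
  move=> mA mB.
  have -> : W @^-1` cylR A B = (\bigcap_i Z i @^-1` A i) `&` U @^-1` B.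
    apply/seteqP; split => w /=.
      by move=> [/= hA hB]; split => // i _; have := hA i; rewrite tnth_mktuple.
    by move=> [hA hB]; split => //= i; rewrite tnth_mktuple; exact: hA.
  rewrite indep // /val; congr (_ * _)%E; last exact: Udist.
  by apply: eq_bigr => i _; rewrite Zdist.
have valWs s A B : (forall i, measurable (A i)) -> measurable B ->
    P (Ws s @^-1` cylR A B) = val A B.
  move=> mA mB.
  have -> : Ws s @^-1` cylR A B =
      (\bigcap_i Z i @^-1` (A ((s^-1)%g i))) `&` U @^-1` B.
    apply/seteqP; split => w /=.
      move=> [/= hA hB]; split => // i _; have := hA ((s^-1)%g i).
      by rewrite !tnth_mktuple permKV.
    move=> [hA hB]; split => //= i; rewrite !tnth_mktuple.
    by have := hA (s i) I; rewrite permK.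
  have mA' : forall i, measurable (A ((s^-1)%g i)) by move=> i; exact: mA.
  rewrite indep //.
  rewrite /val; congr (_ * _)%E; last exact: Udist.
  rewrite [RHS](reindex_inj (@perm_inj _ (s^-1)%g)) /=.
  by apply: eq_bigr => i _; rewrite Zdist.
have valnu A B : (forall i, measurable (A i)) -> measurable B ->
    nu (cylR A B) = val A B.
  move=> mA mB; rewrite /nu /cylR product_measure1E //; last exact: cyl_measurable.
  transitivity (P (zt @^-1` cyl A) * lam B)%E; first by [].
  have -> : zt @^-1` cyl A = (\bigcap_i Z i @^-1` A i) `&` U @^-1` setT.
    apply/seteqP; split => w /=.
      by move=> hA; split => // i _; have := hA i; rewrite tnth_mktuple.
    by move=> [hA hB] i; rewrite tnth_mktuple; exact: hA.
  rewrite indep // preimage_setT probability_setT mule1 /val; congr (_ * _)%E.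
  by apply: eq_bigr => i _; rewrite Zdist.
have nuT : (nu setT < +oo)%E.
  suff -> : nu setT = 1%E by exact: ltry.
  rewrite -setXTT /nu product_measure1E //.
  transitivity (P (zt @^-1` setT) * lam setT)%E; first by [].
  by rewrite preimage_setT probability_setT mul1e; exact: probability_setT.
have PWnu E : measurable E -> P (W @^-1` E) = nu E.
  move=> mE; symmetry.
  have -> : P (W @^-1` E) = distribution P (mfun_Sub (mfun_in _ mW)) E by [].
  apply: (@Y_unique _ (dataT R p) R n.+1 nu
     (distribution P (mfun_Sub (mfun_in _ mW))) nuT _ E mE) => A B mA mB.
  by transitivity (val A B); [exact: valnu | symmetry; exact: valW].
have PWsnu s E : measurable E -> P (Ws s @^-1` E) = nu E.
  move=> mE; symmetry.
  have -> : P (Ws s @^-1` E) = distribution P (mfun_Sub (mfun_in _ (mWs s))) E by [].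
  apply: Y_unique nuT _ E mE => A B mA mB.
  by transitivity (val A B); [exact: valnu | symmetry; exact: valWs].
pose Ei (i : 'I_n.+1) : set (n.+1.-tuple (dataT R p) * R) :=
  [set y | ((V (tnth y.1 i))%:E <=
     Q_Fi V H (tnth y.1) i (talpha V H grid alpha (tnth y.1) y.2))%E].
have EisecE x i : [set u | Ei i (x, u)] = [set u | if u <= cc V H grid alpha (tnth x)
    then bF V H (tnth x) i (talpha1 V H grid alpha (tnth x))
    else bF V H (tnth x) i (talpha2 V H grid alpha (tnth x))].
  by apply/seteqP; split => u; rewrite /Ei /= talphaE; case: ifP.
have mVt j : measurable_fun setT (fun x : n.+1.-tuple (dataT R p) => V (tnth x j)).
  exact: measurableT_comp mV (measurable_tnth j).
have mcN j : measurable_fun setT (fun x : n.+1.-tuple (dataT R p) => cN V H (tnth x) j).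
  rewrite /cN; under eq_fun do rewrite big_mkcond.
  apply: measurable_sum => k; apply: measurable_fun_ifT => //.
  exact: measurable_realfun.measurable_fun_ltr.
have mDD j : measurable_fun setT (fun x : n.+1.-tuple (dataT R p) => DD H (tnth x) j).
  by rewrite /DD; apply: measurable_sum => k; exact: mHmat.
have mEi i : measurable (Ei i).
  apply: (@atoms_measurable _ _ R ('I_n.+1 * 'I_(size grid))%type
      (fun k x => bF V H (tnth x) k.1 (nth 0 grid k.2))).
  - move=> [j m] /=.
    rewrite (_ : [set x | _] = [set x | (nth 0 grid m != 0) &&
        (cN V H (tnth x) j < nth 0 grid m * DD H (tnth x) j)]); last first.
      by apply/seteqP; split => x /=; rewrite /bF Fi_crit.
    apply: mset_bool; apply: measurable_and => //.
    apply: measurable_realfun.measurable_fun_ltr => //.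
    exact: measurable_realfun.measurable_funM.
  - move=> x x' u hb /= Ex.
    have hb' : forall i0 g, g \in grid ->
        bF V H (tnth x) i0 g = bF V H (tnth x') i0 g.
      move=> i0 g gg; have ig : (index g grid < size grid)%N by rewrite index_mem.
      by have := hb (i0, Ordinal ig); rewrite /= nth_index.
    move: Ex; rewrite /Ei /= -(talpha_ext H01 H1 alpha01 g0 g1 u hb').
    have e := hb' i (talpha V H grid alpha (tnth x) u)
      (talpha_in V H01 H1 alpha01 g0 g1 (tnth x) u).
    by rewrite /bF in e; rewrite e.
  - move=> x; rewrite EisecE; apply: mset_bool.
    apply: measurable_fun_ifT => //.
    exact: measurable_realfun.measurable_fun_ler.
have Eperm i : W @^-1` Ei i = Ws (tperm i ord_max) @^-1` Ei ord_max.
  apply/seteqP; split => w; rewrite /Ei /= ptupE (talpha_perm V H01 H1) /=;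
  by rewrite (b_perm V H01 H1) tpermR.
have PEi i : P (W @^-1` Ei i) = nu (Ei ord_max).
  by rewrite Eperm PWsnu.
have nuEi i : nu (Ei i) = nu (Ei ord_max) by rewrite -PWnu // PEi.
have inner x : (\sum_(i < n.+1) lam (xsection (Ei i) x))%E = (alpha *+ n.+1)%:E.
  set z := tnth x.
  set a1 := alpha1 V H grid alpha z; set a2 := alpha2 V H grid alpha z.
  set cz := cc V H grid alpha z.
  have xsE i : xsection (Ei i) x = [set u | if u <= cz
      then bF V H z i (talpha1 V H grid alpha z)
      else bF V H z i (talpha2 V H grid alpha z)].
    rewrite -EisecE; apply/seteqP; split => u; rewrite /xsection /= in_setE //.
  have c01 : 0 <= cz <= 1 := cc01 V H01 H1 alpha01 g0 g1 z.
  transitivity (\sum_(i < n.+1) ((bF V H z i (talpha1 V H grid alpha z))%:R * cz +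
     (bF V H z i (talpha2 V H grid alpha z))%:R * (1 - cz))%:E)%E.
    by apply: eq_bigr => i _; rewrite xsE; exact: unif_sec.
  rewrite sumEFin; congr (_%:E).
  rewrite big_split /= -!mulr_suml.
  have nz : n.+1%:R != 0 :> R by rewrite pnatr_eq0.
  have s1 : \sum_(i < n.+1) (bF V H z i (talpha1 V H grid alpha z))%:R = n.+1%:R * a1.
    by rewrite /a1 /alpha1 Sfun_bF mulrA mulfV ?mul1r.
  have s2 : \sum_(i < n.+1) (bF V H z i (talpha2 V H grid alpha z))%:R = n.+1%:R * a2.
    by rewrite /a2 /alpha2 Sfun_bF mulrA mulfV ?mul1r.
  rewrite s1 s2 -mulr_natl.
  have e : cz * (a1 - a2) = alpha - a2 := cc_eq V H01 H1 alpha01 g0 g1 z.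
  transitivity (n.+1%:R * (a2 + cz * (a1 - a2))); first by ring.
  by rewrite e addrC subrK mulr_natl.
have sumnu : (\sum_(i < n.+1) nu (Ei i))%E = (alpha *+ n.+1)%:E.
  transitivity (\int[PZ]_x (\sum_(i < n.+1) lam (xsection (Ei i) x)))%E.
    by rewrite ge0_integral_sum // => i; exact: measurable_fun_xsection.
  transitivity (\int[PZ]_x (cst (alpha *+ n.+1)%:E x))%E.
    by apply: eq_integral => x _; rewrite inner.
  rewrite integral_cst //.
  transitivity ((alpha *+ n.+1)%:E * P (zt @^-1` setT))%E; first by [].
  by rewrite preimage_setT probability_setT mule1.
have mWE : measurable (W @^-1` Ei ord_max).
  by rewrite -[X in measurable X]setTI; exact: mW.
have fin : P (W @^-1` Ei ord_max) \is a fin_num by exact: fin_num_measure.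
have hsum : (P (W @^-1` Ei ord_max) *+ n.+1 = (alpha *+ n.+1)%:E)%E.
  transitivity (\sum_(i < n.+1) P (W @^-1` Ei ord_max))%E.
    by rewrite sumr_const card_ord.
  rewrite -sumnu; apply: eq_bigr => i _.
  by rewrite nuEi PWnu.
have -> : [set w | ((V (Z ord_max w))%:E <=
              Q_Fhat V H (fun i => Z i w)
                (talpha V H grid alpha (fun i => Z i w) (U w)))%E] =
          W @^-1` Ei ord_max.
  apply/seteqP; split => w; rewrite /Ei /= ztE;
  by rewrite (Fhat_crit V H01 H1) (Fi_crit V H01 H1).
set r := fine (P (W @^-1` Ei ord_max)).
have eP : P (W @^-1` Ei ord_max) = r%:E by rewrite fineK.
have h : r *+ n.+1 = alpha *+ n.+1.
  by apply: EFin_inj; rewrite !EFin_natmul -eP hsum EFin_natmul.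
rewrite eP; congr (_%:E); apply: (@mulIf _ (n.+1%:R)); first by rewrite pnatr_eq0.
by rewrite !mulr_natr.
Qed.
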